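(* Let $a,b\in\mathbb R$, $a<b$, let $f_1,f_2:[a,b]\to[0,+\infty)$ and $g:(0,+\infty)\to\mathbb R$ be continuous, with $f_i>0$ on $(a,b)$ for $i=1,2$ and $g$ nondecreasing. Assume $\overline D^2f_1(x)\ge g(f_1(x))$ and $\underline D^2f_2(x)\le g(f_2(x))$ for every $x\in(a,b)$. Then: (1) if $f_1(a)=f_2(a)$ and $f_1(a')>f_2(a')$ for some $a'\in(a,b]$, then $f_1(x)>f_2(x)$ for every $x\in[a',b]$; (2) if $f_1(b)=f_2(b)$ and $f_1(b')>f_2(b')$ for some $b'\in[a,b)$, then $f_1(x)>f_2(x)$ for every $x\in[a,b']$; (3) if $f_1(a)=f_2(a)$ and $f_1(b)=f_2(b)$, then $f_2(x)\ge f_1(x)$ for every $x\in[a,b]$; moreover, if $f_2(x_0)=f_1(x_0)$ for some $x_0\in(a,b)$, then the right derivatives of $f_1,f_2$ at $x_0$ coincide and the left derivatives of $f_1,f_2$ at $x_0$ coincide (these one-sided derivatives exist).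
   Context: $\overline D^2f(x)=\limsup_{h\to0^+}\frac{f(x+h)+f(x-h)-2f(x)}{h^2}$ and $\underline D^2f(x)=\liminf_{h\to0^+}\frac{f(x+h)+f(x-h)-2f(x)}{h^2}$. *)

(* Defs.v *)
From HB Require Import structures.
From mathcomp Require Import all_boot all_order all_algebra.
From mathcomp Require Import all_classical all_reals all_analysis.
Set Implicit Arguments. Unset Strict Implicit. Unset Printing Implicit Defensive.
Import Order.TTheory GRing.Theory Num.Theory.
Import numFieldNormedType.Exports.
Local Open Scope classical_set_scope.
Local Open Scope ring_scope.

Definition sdq2 {R : realType} (f : R -> R) (x h : R) : R :=
  (f (x + h) + f (x - h) - 2 * f x) / h ^+ 2.

Definition upperD2 {R : realType} (f : R -> R) (x : R) : \bar R :=
  limf_esup (fun h : R => (sdq2 f x h)%:E) (0^'+).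
Definition lowerD2 {R : realType} (f : R -> R) (x : R) : \bar R :=
  limf_einf (fun h : R => (sdq2 f x h)%:E) (0^'+).

Definition dq {R : realType} (f : R -> R) (x h : R) : R := (f (x + h) - f x) / h.

(* Main.v *)
Require Import Defs.
From HB Require Import structures.
From mathcomp Require Import all_boot all_order all_algebra.
From mathcomp Require Import all_classical all_reals all_analysis.
From mathcomp Require Import ring lra.
Import Order.TTheory GRing.Theory Num.Theory.
Import numFieldNormedType.Exports.
Local Open Scope classical_set_scope.
Local Open Scope ring_scope.
Set Implicit Arguments. Unset Strict Implicit.
Section S.
Variable R : realType.
Implicit Types f : R -> R.

Lemma right_set (eta : R) : 0 < eta -> [set t : R | 0 < t < eta] \in (0:R)^'+.
Proof.
move=> he; rewrite inE.
near=> t. apply/andP; split.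
  by near: t; apply: nbhs_right_gt.
by near: t; apply: nbhs_right_lt.
Unshelve. all: by end_near. Qed.

Lemma freq_up f x (r : R) : (r%:E < upperD2 f x)%E ->
  forall eta, 0 < eta -> exists t, 0 < t < eta /\ r < sdq2 f x t.
Proof.
move=> H eta he.
have := right_set he; rewrite inE => hV.
have : (r%:E < ereal_sup ((fun h => (sdq2 f x h)%:E) @` [set t : R | (0 < t < eta)%R]))%E.
  apply: (lt_le_trans H); apply: ereal_inf_lbound; by exists [set t : R | 0 < t < eta].
move/ereal_sup_gt => [_ [t ht <-]]; rewrite lte_fin => hr.
by exists t.
Qed.

Lemma freq_low f x (r : R) : (lowerD2 f x < r%:E)%E ->
  forall eta, 0 < eta -> exists t, 0 < t < eta /\ sdq2 f x t < r.
Proof.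
move=> H eta he.
have := right_set he; rewrite inE => hV.
have : ((- r)%:E < ereal_sup ((\- (fun h => (sdq2 f x h)%:E)) @` [set t : R | (0 < t < eta)%R]))%E.
  move: H; rewrite /lowerD2 /limf_einf lteNl => H.
  apply: (lt_le_trans H); apply: ereal_inf_lbound; by exists [set t : R | 0 < t < eta].
move/ereal_sup_gt => [_ [t ht <-]]; rewrite /= => hr.
exists t; split => //. by move: hr; rewrite lte_fin ltrN2.
Qed.

Definition freqpos f x := forall eta, 0 < eta -> exists t, 0 < t < eta /\ 0 < sdq2 f x t.

Lemma maxlem (u : R -> R) (al be : R) : al < be -> {within `[al, be], continuous u} ->
  u al <= 0 -> u be <= 0 -> (forall x, al < x < be -> 0 < u x -> freqpos u x) ->
  forall x, al <= x <= be -> u x <= 0.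
Proof.
move=> hab hc ha hb hf x hx; rewrite leNgt; apply/negP => hux.
have [c hc1 hmax] := EVT_max (ltW hab) hc.
have hxi : x \in `[al, be] by rewrite in_itv.
have hcx := hmax _ hxi.
move: hc1; rewrite in_itv /= => /andP[hc1 hc2].
have hca : al < c.
  rewrite lt_neqAle hc1 andbT; apply/eqP => E; rewrite -E in hcx; lra.
have hcb : c < be.
  rewrite lt_neqAle hc2 andbT; apply/eqP => E; rewrite E in hcx; lra.
have [t [/andP[t0 te] hs]] := hf c (ltac:(by rewrite hca hcb)) (ltac:(lra)) (Num.min (c - al) (be - c)) (ltac:(by rewrite lt_min; apply/andP; split; lra)).
move: te; rewrite lt_min => /andP[t1 t2].
have h1 : u (c + t) <= u c by apply: hmax; rewrite in_itv /=; apply/andP; split; lra.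
have h2 : u (c - t) <= u c by apply: hmax; rewrite in_itv /=; apply/andP; split; lra.
have : 0 < sdq2 u c t * t ^+ 2 by apply: mulr_gt0 => //; rewrite exprn_gt0.
rewrite /sdq2 divfK; last by rewrite expf_neq0 // gt_eqF.
lra.
Qed.


Lemma cont_affine (A : set R) (u : R -> R) (p q : R) : {within A, continuous u} ->
  {within A, continuous (fun y => u y - (p + q * y))}.
Proof.
move=> hu.
have ha : {within A, continuous (fun y : R => p + q * y)}.
  apply: continuous_subspaceT => y.
  apply: cvgD; first exact: cvg_cst.
  apply: cvgM; [exact: cvg_cst | exact: cvg_id].
move=> x; apply: cvgB; [exact: hu | exact: ha].
Qed.


Lemma sdq2_affine (u : R -> R) p q x t :
  sdq2 (fun y => u y - (p + q * y)) x t = sdq2 u x t.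
Proof. by rewrite /sdq2; congr (_ / _); ring. Qed.

Lemma chord (u : R -> R) (al be : R) : al < be -> {within `[al, be], continuous u} ->
  (forall x, al < x < be -> freqpos u x) ->
  forall x, al <= x <= be -> u x * (be - al) <= u al * (be - x) + u be * (x - al).
Proof.
move=> hab hc hf x hx.
pose q := (u be - u al) / (be - al).
pose p := u al - q * al.
have hw := @maxlem (fun y => u y - (p + q * y)) al be hab (@cont_affine _ _ p q hc).
have hba : be - al != 0 by rewrite subr_eq0 gt_eqF.
have e1 : p + q * al = u al by rewrite /p; ring.
have e2 : p + q * be = u be by rewrite /p /q; field.
have := hw (ltac:(rewrite e1; lra)) (ltac:(rewrite e2; lra)).
move=> H.
have {H}H : u x <= p + q * x.
  rewrite -subr_le0; apply: H hx => y hy _ eta he; have [t ht] := hf y hy eta he; exists t; by rewrite sdq2_affine.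
have hpos : 0 < be - al by lra.
have : u x * (be - al) <= (p + q * x) * (be - al) by rewrite ler_pM2r.
have -> : (p + q * x) * (be - al) = u al * (be - x) + u be * (x - al).
  by rewrite /p /q; field.
by [].
Qed.


Lemma lin_step (A B C D : R) : C <= D -> B - A = D - C -> A <= B.
Proof. by move=> H E; rewrite -subr_ge0 E subr_ge0. Qed.

Lemma chord_sub (u : R -> R) (al be : R) : {within `[al, be], continuous u} ->
  (forall x, al < x < be -> freqpos u x) ->
  forall y z x, al <= y -> y < z -> z <= be -> y <= x <= z ->
  u x * (z - y) <= u y * (z - x) + u z * (x - y).
Proof.
move=> hc hf y z x h1 h2 h3 hx.
apply: chord => //.
- apply: continuous_subspaceW hc => w /=; rewrite !in_itv /= => /andP[w1 w2].
  apply/andP; split; lra.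
- move=> w /andP[w1 w2]; apply: hf; apply/andP; split; lra.
Qed.

Lemma midpt (u : R -> R) (al be : R) : {within `[al, be], continuous u} ->
  (forall x, al < x < be -> freqpos u x) ->
  forall x t, 0 < t -> al <= x - t -> x + t <= be -> 0 <= sdq2 u x t.
Proof.
move=> hc hf x t t0 h1 h2.
have l1 : x - t < x + t by lra.
have l2 : x - t <= x <= x + t by apply/andP; split; lra.
have H := chord_sub hc hf h1 l1 h2 l2.
have H2 : 0 <= t * (u (x + t) + u (x - t) - 2 * u x).
  by apply: (lin_step H); ring.
rewrite /sdq2; apply: divr_ge0; last by rewrite exprn_ge0 // ltW.
by rewrite pmulr_rge0 in H2.
Qed.

Lemma frac_le (a b c d : R) : 0 < b -> 0 < d -> a * d <= c * b -> a / b <= c / d.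
Proof.
move=> b0 d0 H; rewrite ler_pdivrMr // mulrAC ler_pdivlMr //.
Qed.

Lemma dq_neg (u : R -> R) x0 h : dq u x0 h = (u x0 - u (x0 + h)) / (x0 - (x0 + h)).
Proof.
have -> : x0 - (x0 + h) = - h by ring.
by rewrite /dq invrN mulrN -mulNr opprB.
Qed.

Lemma dq_mono (u : R -> R) (al be : R) : {within `[al, be], continuous u} ->
  (forall x, al < x < be -> freqpos u x) ->
  forall x0 h1 h2, al <= x0 <= be -> h1 < h2 -> h1 != 0 -> h2 != 0 ->
  al <= x0 + h1 -> x0 + h2 <= be -> dq u x0 h1 <= dq u x0 h2.
Proof.
move=> hc hf x0 h1 h2 /andP[x1 x2] h12 n1 n2 e1 e2.
have cs := chord_sub hc hf.
have [p1|n1'] := ltP 0 h1.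
  have l1 : x0 < x0 + h2 by lra.
  have l2 : x0 <= x0 + h1 <= x0 + h2 by apply/andP; split; lra.
  have H := cs _ _ _ x1 l1 e2 l2.
  rewrite /dq; apply: frac_le; [lra|lra|]; apply: (lin_step H); ring.
have m1 : h1 < 0 by rewrite lt_neqAle n1.
have [p2|n2'] := ltP 0 h2.
  have l1 : x0 + h1 < x0 + h2 by lra.
  have l2 : x0 + h1 <= x0 <= x0 + h2 by apply/andP; split; lra.
  have H := cs _ _ _ e1 l1 e2 l2.
  rewrite dq_neg /dq; apply: frac_le; [lra|lra|]; apply: (lin_step H); ring.
have m2 : h2 < 0 by rewrite lt_neqAle n2.
have l1 : x0 + h1 < x0 by lra.
have l2 : x0 + h1 <= x0 + h2 <= x0 by apply/andP; split; lra.
have H := cs _ _ _ e1 l1 x2 l2.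
rewrite !(dq_neg u x0); apply: frac_le; [lra|lra|]; apply: (lin_step H); ring.
Qed.

End S.
Section S2.
Variable R : realType.

Lemma ne0n (h : R) : h < 0 -> h != 0. Proof. by move=> H; rewrite lt_eqF. Qed.
Lemma ne0p (h : R) : 0 < h -> h != 0. Proof. by move=> H; rewrite gt_eqF. Qed.

Lemma conv_der (u : R -> R) (al be x0 : R) : al < x0 < be ->
  {within `[al, be], continuous u} -> (forall x, al < x < be -> freqpos u x) ->
  exists dr dl, dq u x0 h @[h --> 0^'+] --> dr /\ dq u x0 h @[h --> 0^'-] --> dl /\ dl <= dr.
Proof.
move=> /andP[xa xb] hc hf.
have hx0 : al <= x0 <= be by apply/andP; split; lra.
have mono := dq_mono hc hf hx0.
have mono' : forall h1 h2, h1 <= h2 -> h1 != 0 -> h2 != 0 -> al - x0 < h1 -> h2 < be - x0 ->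
    dq u x0 h1 <= dq u x0 h2.
  move=> h1 h2; rewrite le_eqVlt => /orP[/eqP -> //|lt] n1 n2 l1 l2.
  apply: mono => //; lra.
have ndr : cvg (dq u x0 h @[h --> 0^'+]).
  apply: nondecreasing_at_right_is_cvgr.
  - near=> e => y z; rewrite !in_itv /= => /andP[y0 ye] /andP[z0 ze] yz.
    have e1 : e < be - x0 by near: e; apply: nbhs_right_lt; lra.
    apply: mono' => //; [apply: ne0p|apply: ne0p|..]; lra.
  - near=> e; exists (dq u x0 ((al - x0) / 2)) => _ [y /= + <-].
    rewrite in_itv /= => /andP[y0 ye].
    have e1 : e < be - x0 by near: e; apply: nbhs_right_lt; lra.
    apply: mono'; [|apply: ne0n|apply: ne0p|..]; lra.
have ndl : cvg (dq u x0 h @[h --> 0^'-]).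
  apply: nondecreasing_at_left_is_cvgr.
  - near=> e => y z; rewrite !in_itv /= => /andP[ey y0] /andP[ez z0] yz.
    have e1 : al - x0 < e by near: e; apply: nbhs_left_gt; lra.
    apply: mono' => //; [apply: ne0n|apply: ne0n|..]; lra.
  - near=> e; exists (dq u x0 ((be - x0) / 2)) => _ [y /= + <-].
    rewrite in_itv /= => /andP[ey y0].
    have e1 : al - x0 < e by near: e; apply: nbhs_left_gt; lra.
    apply: mono'; [|apply: ne0n|apply: ne0p|..]; lra.
move/cvg_ex: ndr => [dr hdr]; move/cvg_ex: ndl => [dl hdl].
exists dr, dl; split => //; split => //.
have H : forall h, 0 < h < be - x0 -> dl <= dq u x0 h.
  move=> h /andP[h0 h1].
  apply: (ler_cvg_to hdl (cvg_cst _)).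
  near=> y.
  have y0 : y < 0 by near: y; apply: nbhs_left_lt.
  have y1 : al - x0 < y by near: y; apply: nbhs_left_gt; lra.
  apply: mono'; [|apply: ne0n|apply: ne0p|..]; lra.
apply: (ler_cvg_to (cvg_cst _) hdr).
near=> h; apply: H; apply/andP; split.
  by near: h; apply: nbhs_right_gt.
by near: h; apply: nbhs_right_lt; lra.
Unshelve. all: by end_near.
Qed.
End S2.
Section S3.
Variable R : realType.

Lemma nbhs_interval (a b x : R) (P : R -> Prop) : a < x < b -> (\forall y \near x, P y) ->
  exists rho, 0 < rho /\ a < x - rho /\ x + rho < b /\ forall y, x - rho <= y <= x + rho -> P y.
Proof.
move=> /andP[xa xb] /nbhs_ballP [r /= r0 Hr].
exists (Num.min (r / 2) (Num.min ((x - a) / 2) ((b - x) / 2))).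
have : Num.min (r / 2) (Num.min ((x - a) / 2) ((b - x) / 2)) <= r / 2 by rewrite ge_min lexx.
have : Num.min (r / 2) (Num.min ((x - a) / 2) ((b - x) / 2)) <= (x - a) / 2 by rewrite !ge_min lexx orbT.
have : Num.min (r / 2) (Num.min ((x - a) / 2) ((b - x) / 2)) <= (b - x) / 2 by rewrite !ge_min lexx !orbT.
have : 0 < Num.min (r / 2) (Num.min ((x - a) / 2) ((b - x) / 2)).
  by rewrite !lt_min; apply/and3P; split; lra.
set rho := Num.min _ _ => h0 h1 h2 h3.
split => //; split; first lra; split; first lra.
move=> y /andP[y1 y2]; apply: Hr; rewrite /ball /= ltr_norml; apply/andP; split; lra.
Qed.

Lemma interior_cvg (a b : R) (f : R -> R) x : a < b -> {within `[a, b], continuous f} ->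
  a < x < b -> f y @[y --> x] --> f x.
Proof.
move=> ab hc hx; have [H _ _] := (continuous_within_itvP f ab).1 hc.
by apply: H; rewrite in_itv.
Qed.


Lemma sdq2_q1 (f : R -> R) c x t : t != 0 ->
  sdq2 (fun y => f y - c * (y * y) / 2) x t = sdq2 f x t - c.
Proof. move=> t0; rewrite /sdq2; by field. Qed.

Lemma sdq2_q2 (f : R -> R) c x t : t != 0 ->
  sdq2 (fun y => c * (y * y) / 2 - f y) x t = c - sdq2 f x t.
Proof. move=> t0; rewrite /sdq2; by field. Qed.

Lemma sdq2_k (f1 f2 : R -> R) e al be x t : t != 0 ->
  sdq2 (fun y => f1 y - f2 y + e * ((y - al) * (y - be))) x t = sdq2 f1 x t - sdq2 f2 x t + 2 * e.
Proof. move=> t0; rewrite /sdq2; by field. Qed.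

Lemma cont_q1 (A : set R) (f : R -> R) c : {within A, continuous f} ->
  {within A, continuous (fun y => f y - c * (y * y) / 2)}.
Proof.
move=> hu.
have ha : {within A, continuous (fun y : R => c * (y * y) / 2)}.
  apply: continuous_subspaceT => y.
  apply: cvgM; last exact: cvg_cst.
  apply: cvgM; [exact: cvg_cst | apply: cvgM; exact: cvg_id].
move=> x; apply: cvgB; [exact: hu | exact: ha].
Qed.

Lemma cont_q2 (A : set R) (f : R -> R) c : {within A, continuous f} ->
  {within A, continuous (fun y => c * (y * y) / 2 - f y)}.
Proof.
move=> hu.
have ha : {within A, continuous (fun y : R => c * (y * y) / 2)}.
  apply: continuous_subspaceT => y.
  apply: cvgM; last exact: cvg_cst.
  apply: cvgM; [exact: cvg_cst | apply: cvgM; exact: cvg_id].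
move=> x; apply: cvgB; [exact: ha | exact: hu].
Qed.

Lemma cont_k (A : set R) (f1 f2 : R -> R) e al be : {within A, continuous f1} ->
  {within A, continuous f2} ->
  {within A, continuous (fun y => f1 y - f2 y + e * ((y - al) * (y - be)))}.
Proof.
move=> h1 h2.
have ha : {within A, continuous (fun y : R => e * ((y - al) * (y - be)))}.
  apply: continuous_subspaceT => y.
  apply: cvgM; first exact: cvg_cst.
  apply: cvgM; (apply: cvgB; [exact: cvg_id | exact: cvg_cst]).
move=> x; apply: cvgD; last exact: ha.
apply: cvgB; [exact: h1 | exact: h2].
Qed.

Lemma freq_q1 (f : R -> R) c x : (c%:E < upperD2 f x)%E ->
  freqpos (fun y => f y - c * (y * y) / 2) x.
Proof.
move=> H eta he; have [t [/andP[t0 t1] ht]] := freq_up H he.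
exists t; split; first by rewrite t0.
by rewrite sdq2_q1 ?gt_eqF // subr_gt0.
Qed.

Lemma freq_q2 (f : R -> R) c x : (lowerD2 f x < c%:E)%E ->
  freqpos (fun y => c * (y * y) / 2 - f y) x.
Proof.
move=> H eta he; have [t [/andP[t0 t1] ht]] := freq_low H he.
exists t; split; first by rewrite t0.
by rewrite sdq2_q2 ?gt_eqF // subr_gt0.
Qed.

Lemma loc_lower (f : R -> R) c al be : {within `[al, be], continuous f} ->
  (forall y, al < y < be -> (c%:E < upperD2 f y)%E) ->
  forall x t, 0 < t -> al <= x - t -> x + t <= be -> c <= sdq2 f x t.
Proof.
move=> hc hf x t t0 h1 h2.
have := midpt (cont_q1 (c:=c) hc) (fun y hy => freq_q1 (hf y hy)) t0 h1 h2.
by rewrite sdq2_q1 ?gt_eqF // subr_ge0.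
Qed.

Lemma loc_upper (f : R -> R) c al be : {within `[al, be], continuous f} ->
  (forall y, al < y < be -> (lowerD2 f y < c%:E)%E) ->
  forall x t, 0 < t -> al <= x - t -> x + t <= be -> sdq2 f x t <= c.
Proof.
move=> hc hf x t t0 h1 h2.
have := midpt (cont_q2 (c:=c) hc) (fun y hy => freq_q2 (hf y hy)) t0 h1 h2.
by rewrite sdq2_q2 ?gt_eqF // subr_ge0.
Qed.

End S3.
Section S4.
Variable R : realType.

Lemma sub_cont (a b al be : R) (f : R -> R) : a <= al -> be <= b ->
  {within `[a, b], continuous f} -> {within `[al, be], continuous f}.
Proof.
move=> h1 h2; apply: continuous_subspaceW => w /=; rewrite !in_itv /= => /andP[w1 w2].
apply/andP; split; lra.
Qed.

Lemma in_pos (x : R) : 0 < x -> x \in `]0, +oo[.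
Proof. by move=> h; rewrite in_itv /= h. Qed.

Lemma core (a b : R) (f1 f2 g : R -> R) :
  {within `[a, b], continuous f1} -> {within `[a, b], continuous f2} ->
  (forall x, a < x < b -> 0 < f2 x) ->
  {in `]0, +oo[ &, {homo g : x y / x <= y}} ->
  (forall x, a < x < b -> ((g (f1 x))%:E <= upperD2 f1 x)%E) ->
  (forall x, a < x < b -> (lowerD2 f2 x <= (g (f2 x))%:E)%E) ->
  forall al be, a <= al -> al < be -> be <= b -> f1 al <= f2 al -> f1 be <= f2 be ->
  forall x, al <= x <= be -> f1 x <= f2 x.
Proof.
move=> hc1 hc2 hp2 hg hu hl al be hal hab hbe hfa hfb x hx.
rewrite leNgt; apply/negP => hlt.
have ab : a < b by lra.
move: (hx) => /andP[hx1 hx2].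
have P0 : 0 <= (x - al) * (be - x) by apply: mulr_ge0; lra.
set P := (x - al) * (be - x) in P0.
set D := f1 x - f2 x.
have D0 : 0 < D by rewrite /D; lra.
have key : forall e, 0 < e -> D <= e * P.
  move=> e e0.
  pose k := fun y => f1 y - f2 y + e * ((y - al) * (y - be)).
  have hk : {within `[al, be], continuous k}.
    by apply: cont_k; apply: (sub_cont hal hbe).
  have ka : k al <= 0 by rewrite /k subrr mul0r mulr0; lra.
  have kb : k be <= 0 by rewrite /k subrr mulr0 mulr0; lra.
  have hf : forall y, al < y < be -> 0 < k y -> freqpos k y.
    move=> y /andP[y1 y2] ky.
    have q : 0 <= e * ((y - al) * (be - y)) by apply: mulr_ge0; [lra|apply: mulr_ge0; lra].
    have E : e * ((y - al) * (y - be)) = - (e * ((y - al) * (be - y))) by ring.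
    have fy : f2 y < f1 y by move: ky; rewrite /k E; lra.
    have ay : a < y < b by apply/andP; split; lra.
    have f2p := hp2 y ay.
    set lam := (f1 y + f2 y) / 2.
    have N : \forall z \near y, lam < f1 z /\ f2 z < lam.
      near=> z; split; near: z.
        by apply: (cvgr_gt _ (interior_cvg ab hc1 ay)); rewrite /lam; lra.
      by apply: (cvgr_lt _ (interior_cvg ab hc2 ay)); rewrite /lam; lra.
    have [rho [r0 [r1 [r2 Hr]]]] := nbhs_interval ay N.
    have hc1' : {within `[y - rho, y + rho], continuous f1} by apply: sub_cont hc1; lra.
    have hc2' : {within `[y - rho, y + rho], continuous f2} by apply: sub_cont hc2; lra.
    have lam0 : 0 < lam by rewrite /lam; lra.
    have hlow := @loc_lower _ f1 (g lam - e / 2) _ _ hc1'.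
    have hup := @loc_upper _ f2 (g lam + e / 2) _ _ hc2'.
    have L1 : forall z, y - rho < z < y + rho -> ((g lam - e / 2)%:E < upperD2 f1 z)%E.
      move=> z /andP[z1 z2].
      have [Hz1 Hz2] : lam < f1 z /\ f2 z < lam by apply: Hr; apply/andP; split; lra.
      have az : a < z < b by apply/andP; split; lra.
      apply: (lt_le_trans _ (hu z az)); rewrite lte_fin.
      have : g lam <= g (f1 z) by apply: hg; rewrite ?in_pos //; lra.
      lra.
    have L2 : forall z, y - rho < z < y + rho -> (lowerD2 f2 z < (g lam + e / 2)%:E)%E.
      move=> z /andP[z1 z2].
      have [Hz1 Hz2] : lam < f1 z /\ f2 z < lam by apply: Hr; apply/andP; split; lra.
      have az : a < z < b by apply/andP; split; lra.
      apply: (le_lt_trans (hl z az)); rewrite lte_fin.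
      have : g (f2 z) <= g lam by apply: hg; rewrite ?in_pos //; [apply: hp2|]; lra.
      lra.
    move=> eta he.
    have t0 : 0 < Num.min (eta / 2) rho by rewrite lt_min; apply/andP; split; lra.
    have t1 : Num.min (eta / 2) rho <= eta / 2 by rewrite ge_min lexx.
    have t2 : Num.min (eta / 2) rho <= rho by rewrite ge_min lexx orbT.
    set t := Num.min (eta / 2) rho in t0 t1 t2.
    exists t; split; first by apply/andP; split; lra.
    rewrite /k sdq2_k ?gt_eqF //.
    have := hlow L1 y t t0 (ltac:(lra)) (ltac:(lra)).
    have := hup L2 y t t0 (ltac:(lra)) (ltac:(lra)).
    lra.
  have := maxlem hab hk ka kb hf hx.
  rewrite /k.
  have -> : e * ((x - al) * (x - be)) = - (e * P) by rewrite /P; ring.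
  rewrite /D; lra.
have P1 : 0 < P + 1 by lra.
have := key (D / (P + 1)) (divr_gt0 D0 P1).
have : D / (P + 1) * P < D.
  by rewrite mulrAC ltr_pdivrMr // ltr_pM2l //; lra.
lra.
Unshelve. all: by end_near.
Qed.
End S4.
Section S5.
Variable R : realType.

Lemma cvg_near_eq (F : set_system R) {FF : Filter F} (u v : R -> R) (l : R) :
  (\forall h \near F, u h = v h) -> u @ F --> l -> v @ F --> l.
Proof.
move=> E H; apply: cvg_trans H; apply: near_eq_cvg.
by apply: filterS E => h.
Qed.

Lemma phi_r (c x0 : R) : (fun h : R => c * (2 * x0 + h) / 2) @ 0^'+ --> c * x0.
Proof.
have -> : c * x0 = c * (2 * x0 + 0) / 2 by field.
apply: cvg_at_right_filter.
apply: cvgM; last exact: cvg_cst.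
apply: cvgM; first exact: cvg_cst.
apply: cvgD; [exact: cvg_cst | exact: cvg_id].
Qed.

Lemma phi_l (c x0 : R) : (fun h : R => c * (2 * x0 + h) / 2) @ 0^'- --> c * x0.
Proof.
have -> : c * x0 = c * (2 * x0 + 0) / 2 by field.
apply: cvg_at_left_filter.
apply: cvgM; last exact: cvg_cst.
apply: cvgM; first exact: cvg_cst.
apply: cvgD; [exact: cvg_cst | exact: cvg_id].
Qed.

Lemma dq_q1 (f : R -> R) c x0 h : h != 0 ->
  dq f x0 h = dq (fun y => f y - c * (y * y) / 2) x0 h + c * (2 * x0 + h) / 2.
Proof. by move=> h0; rewrite /dq; field. Qed.

Lemma dq_q2 (f : R -> R) c x0 h : h != 0 ->
  dq f x0 h = c * (2 * x0 + h) / 2 - dq (fun y => c * (y * y) / 2 - f y) x0 h.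
Proof. by move=> h0; rewrite /dq; field. Qed.

Lemma derivs (a b : R) (f1 f2 g : R -> R) :
  a < b ->
  {within `[a, b], continuous f1} -> {within `[a, b], continuous f2} ->
  (forall x, a < x < b -> 0 < f1 x) ->
  (forall x, a < x < b -> 0 < f2 x) ->
  {in `]0, +oo[ &, {homo g : x y / x <= y}} ->
  (forall x, a < x < b -> ((g (f1 x))%:E <= upperD2 f1 x)%E) ->
  (forall x, a < x < b -> (lowerD2 f2 x <= (g (f2 x))%:E)%E) ->
  (forall x, a <= x <= b -> f1 x <= f2 x) ->
  forall x0, a < x0 < b -> f2 x0 = f1 x0 ->
     (exists dr : R, dq f1 x0 h @[h --> 0^'+] --> dr /\ dq f2 x0 h @[h --> 0^'+] --> dr) /\
     (exists dl : R, dq f1 x0 h @[h --> 0^'-] --> dl /\ dq f2 x0 h @[h --> 0^'-] --> dl).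
Proof.
move=> ab hc1 hc2 hp1 hp2 hg hu hl hle x0 hx0 heq.
have v0 : 0 < f1 x0 := hp1 x0 hx0.
have N : \forall z \near x0, f1 x0 / 2 < f1 z /\ f2 z < f1 x0 + 1.
  near=> z; split; near: z.
    by apply: (cvgr_gt _ (interior_cvg ab hc1 hx0)); lra.
  by apply: (cvgr_lt _ (interior_cvg ab hc2 hx0)); rewrite heq; lra.
have [rho [r0 [r1 [r2 Hr]]]] := nbhs_interval hx0 N.
have hc1' : {within `[x0 - rho, x0 + rho], continuous f1} by apply: sub_cont hc1; lra.
have hc2' : {within `[x0 - rho, x0 + rho], continuous f2} by apply: sub_cont hc2; lra.
set c1 := g (f1 x0 / 2) - 1.
set c2 := g (f1 x0 + 1) + 1.
have L1 : forall z, x0 - rho < z < x0 + rho -> freqpos (fun y => f1 y - c1 * (y * y) / 2) z.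
  move=> z /andP[z1 z2]; apply: freq_q1.
  have [Hz1 Hz2] : f1 x0 / 2 < f1 z /\ f2 z < f1 x0 + 1 by apply: Hr; apply/andP; split; lra.
  have az : a < z < b by apply/andP; split; lra.
  apply: (lt_le_trans _ (hu z az)); rewrite lte_fin.
  have : g (f1 x0 / 2) <= g (f1 z).
    by apply: hg; [apply: in_pos; lra | apply: in_pos; lra | lra].
  rewrite /c1; lra.
have L2 : forall z, x0 - rho < z < x0 + rho -> freqpos (fun y => c2 * (y * y) / 2 - f2 y) z.
  move=> z /andP[z1 z2]; apply: freq_q2.
  have [Hz1 Hz2] : f1 x0 / 2 < f1 z /\ f2 z < f1 x0 + 1 by apply: Hr; apply/andP; split; lra.
  have az : a < z < b by apply/andP; split; lra.
  apply: (le_lt_trans (hl z az)); rewrite lte_fin.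
  have : g (f2 z) <= g (f1 x0 + 1).
    by apply: hg; [apply: in_pos; apply: hp2; lra | apply: in_pos; lra | lra].
  rewrite /c2; lra.
have hx0' : x0 - rho < x0 < x0 + rho by apply/andP; split; lra.
have [dr1 [dl1 [Hr1 [Hl1 D1]]]] := conv_der hx0' (cont_q1 (c:=c1) hc1') L1.
have [dr2 [dl2 [Hr2 [Hl2 D2]]]] := conv_der hx0' (cont_q2 (c:=c2) hc2') L2.
have nr : \forall h \near (0:R)^'+, h != 0.
  by near=> h; apply: ne0p; near: h; apply: nbhs_right_gt.
have nl : \forall h \near (0:R)^'-, h != 0.
  by near=> h; apply: ne0n; near: h; apply: nbhs_left_lt.
have R1 : dq f1 x0 h @[h --> 0^'+] --> dr1 + c1 * x0.
  apply: (cvg_near_eq (u := fun h => dq (fun y => f1 y - c1 * (y * y) / 2) x0 h + c1 * (2 * x0 + h) / 2)).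
    by apply: filterS nr => h h0; rewrite -dq_q1.
  by apply: cvgD; [exact: Hr1 | exact: phi_r].
have L1' : dq f1 x0 h @[h --> 0^'-] --> dl1 + c1 * x0.
  apply: (cvg_near_eq (u := fun h => dq (fun y => f1 y - c1 * (y * y) / 2) x0 h + c1 * (2 * x0 + h) / 2)).
    by apply: filterS nl => h h0; rewrite -dq_q1.
  by apply: cvgD; [exact: Hl1 | exact: phi_l].
have R2 : dq f2 x0 h @[h --> 0^'+] --> c2 * x0 - dr2.
  apply: (cvg_near_eq (u := fun h => c2 * (2 * x0 + h) / 2 - dq (fun y => c2 * (y * y) / 2 - f2 y) x0 h)).
    by apply: filterS nr => h h0; rewrite -dq_q2.
  by apply: cvgB; [exact: phi_r | exact: Hr2].
have L2' : dq f2 x0 h @[h --> 0^'-] --> c2 * x0 - dl2.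
  apply: (cvg_near_eq (u := fun h => c2 * (2 * x0 + h) / 2 - dq (fun y => c2 * (y * y) / 2 - f2 y) x0 h)).
    by apply: filterS nl => h h0; rewrite -dq_q2.
  by apply: cvgB; [exact: phi_l | exact: Hl2].
have le_r : dr1 + c1 * x0 <= c2 * x0 - dr2.
  apply: (ler_cvg_to R1 R2); near=> h.
  have h0 : 0 < h by near: h; apply: nbhs_right_gt.
  have h1 : h < b - x0 by near: h; apply: nbhs_right_lt; lra.
  rewrite /dq heq; apply: ler_wpM2r; first by rewrite invr_ge0; lra.
  rewrite lerD2r; apply: hle; apply/andP; split; lra.
have le_l : c2 * x0 - dl2 <= dl1 + c1 * x0.
  apply: (ler_cvg_to L2' L1'); near=> h.
  have h0 : h < 0 by near: h; apply: nbhs_left_lt.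
  have h1 : a - x0 < h by near: h; apply: nbhs_left_gt; lra.
  rewrite /dq heq; apply: ler_wnM2r; first by rewrite invr_le0; lra.
  rewrite lerD2r; apply: hle; apply/andP; split; lra.
split.
  exists (dr1 + c1 * x0); split => //.
  have -> : dr1 + c1 * x0 = c2 * x0 - dr2 by lra.
  exact: R2.
exists (dl1 + c1 * x0); split => //.
have -> : dl1 + c1 * x0 = c2 * x0 - dl2 by lra.
exact: L2'.
Unshelve. all: by end_near.
Qed.
End S5.
Unset Implicit Arguments.
Theorem propositionA4 (R : realType) (a b : R) (f1 f2 g : R -> R) :
  a < b ->
  {within `[a, b], continuous f1} ->
  {within `[a, b], continuous f2} ->
  {within `]0, +oo[, continuous g} ->
  (forall x, a <= x <= b -> 0 <= f1 x) ->
  (forall x, a <= x <= b -> 0 <= f2 x) ->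
  (forall x, a < x < b -> 0 < f1 x) ->
  (forall x, a < x < b -> 0 < f2 x) ->
  {in `]0, +oo[ &, {homo g : x y / x <= y}} ->
  (forall x, a < x < b -> ((g (f1 x))%:E <= upperD2 f1 x)%E) ->
  (forall x, a < x < b -> (lowerD2 f2 x <= (g (f2 x))%:E)%E) ->
  (* (1) *)
  ((f1 a = f2 a -> forall a', a < a' <= b -> f1 a' > f2 a' ->
      forall x, a' <= x <= b -> f1 x > f2 x)
  /\
  (* (2) *)
   (f1 b = f2 b -> forall b', a <= b' < b -> f1 b' > f2 b' ->
      forall x, a <= x <= b' -> f1 x > f2 x)
  /\
  (* (3) *)
   (f1 a = f2 a -> f1 b = f2 b ->
      (forall x, a <= x <= b -> f2 x >= f1 x) /\
      (forall x0, a < x0 < b -> f2 x0 = f1 x0 ->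
         (exists dr : R, dq f1 x0 h @[h --> 0^'+] --> dr /\ dq f2 x0 h @[h --> 0^'+] --> dr) /\
         (exists dl : R, dq f1 x0 h @[h --> 0^'-] --> dl /\ dq f2 x0 h @[h --> 0^'-] --> dl)))).
Proof.
move=> ab hc1 hc2 _ hn1 hn2 hp1 hp2 hg hu hl.
have C := core hc1 hc2 hp2 hg hu hl.
split; [|split].
- move=> ha a' /andP[h1 h2] ha' x /andP[x1 x2].
  rewrite ltNge; apply/negP => hx.
  have ax : a' < x.
    rewrite lt_neqAle x1 andbT; apply/eqP => E; rewrite -E in hx; lra.
  have := C a x (lexx a) (ltac:(lra)) x2 (ltac:(rewrite ha; lra)) hx a' (ltac:(apply/andP; split; lra)).
  lra.
- move=> hb b' /andP[h1 h2] hb' x /andP[x1 x2].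
  rewrite ltNge; apply/negP => hx.
  have ax : x < b'.
    rewrite lt_neqAle x2 andbT; apply/eqP => E; rewrite E in hx; lra.
  have := C x b x1 (ltac:(lra)) (lexx b) hx (ltac:(rewrite hb; lra)) b' (ltac:(apply/andP; split; lra)).
  lra.
- move=> ha hb.
  have H : forall x, a <= x <= b -> f1 x <= f2 x.
    by apply: C => //; rewrite ?ha ?hb.
  split => //.
  move=> x0 hx0 heq; exact: (derivs ab hc1 hc2 hp1 hp2 hg hu hl H hx0 heq).
Qed.
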